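(* Let $m<M$ be real numbers and let $X$ be a random variable taking values in $[m,M]$, either discrete (taking finitely many values $x_1,\dots,x_n\in[m,M]$ with probabilities $p_1,\dots,p_n$) or continuous (with probability density $f$ on $[m,M]$). Let $\mu_1'$ be its mean and $\mu_2,\mu_3,\mu_4$ its second, third and fourth central moments, and assume $\mu_2\neq(\mu_1'-m)(M-\mu_1')$. Then $$\mu_4\le (\mu_1'-m)(M-\mu_1')\mu_2+(m+M-2\mu_1')\mu_3-\frac{\big(\mu_3-(m+M-2\mu_1')\mu_2\big)^2}{(\mu_1'-m)(M-\mu_1')-\mu_2}.$$
   Context: The mean is $\mu_1'=\sum_{i=1}^n p_i x_i$ (discrete case) or $\mu_1'=\int_m^M x f(x)\,dx$ (continuous case), where $\sum p_i=1$, resp. $\int_m^M f(x)\,dx=1$. The $r$-th central moment is $\mu_r=\sum_{i=1}^n p_i (x_i-\mu_1')^r$, resp. $\mu_r=\int_m^M (x-\mu_1')^r f(x)\,dx$. *)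

(* Defs.v *)
From mathcomp Require Import all_boot all_order all_algebra.
From mathcomp Require Import all_classical all_reals all_analysis.
Set Implicit Arguments. Unset Strict Implicit. Unset Printing Implicit Defensive.
Import Order.TTheory GRing.Theory Num.Theory.
Local Open Scope classical_set_scope.
Local Open Scope ring_scope.

Definition dmean (R : realType) (n : nat) (p x : 'I_n -> R) : R :=
  \sum_(i < n) p i * x i.

Definition dcmoment (R : realType) (n : nat) (p x : 'I_n -> R) (r : nat) : R :=
  \sum_(i < n) p i * (x i - dmean p x) ^+ r.

Definition cmean (R : realType) (m M : R) (f : R -> R) : R :=
  Rintegral lebesgue_measure `[m, M] (fun x => x * f x).

Definition ccmoment (R : realType) (m M : R) (f : R -> R) (r : nat) : R :=
  Rintegral lebesgue_measure `[m, M] (fun x => (x - cmean m M f) ^+ r * f x).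

Definition mu4_bound (R : realType) (m M mu mu2 mu3 : R) : R :=
  (mu - m) * (M - mu) * mu2 + (m + M - 2 * mu) * mu3
  - (mu3 - (m + M - 2 * mu) * mu2) ^+ 2 / ((mu - m) * (M - mu) - mu2).

(* Main.v *)
Require Import Defs.
From mathcomp Require Import all_boot all_order all_algebra.
From mathcomp Require Import all_classical all_reals all_analysis.
From mathcomp Require Import ring lra.
Import Order.TTheory GRing.Theory Num.Theory.
Local Open Scope classical_set_scope.
Local Open Scope ring_scope.

Lemma key_alg (R : realType) (A s I2 I3 I4 : R) :
  A - I2 != 0 ->
   0 <= - I4 + s * I3 + A * I2 + 2 * (- (I3 - s * I2) / (A - I2)) * (I3 - s * I2)
      + (- (I3 - s * I2) / (A - I2)) ^+ 2 * (A - I2) ->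
  I4 <= A * I2 + s * I3 - (I3 - s * I2) ^+ 2 / (A - I2).
Proof.
move=> hE.
set D := I3 - s * I2; set E := A - I2.
have Heq : 2 * (- D / E) * D + (- D / E) ^+ 2 * E = - (D ^+ 2 / E).
  by field.
rewrite -addrA Heq; lra.
Qed.

Section Cont.
Variables (R : realType) (m M : R) (f : R -> R).
Hypothesis (mf : measurable_fun `[m, M] f)
  (intf : (@lebesgue_measure R).-integrable `[m, M] (EFin \o f)).

Lemma mD : measurable (`[m, M] : set (measurableTypeR R)).
Proof. exact: measurable_itv. Qed.

Definition INT (g : R -> R) := (@lebesgue_measure R).-integrable `[m, M] (EFin \o g).

Lemma intZ a g : INT g -> INT (fun x => a * g x).
Proof.
move=> ig; have := integrableZl mD a ig.
by congr (integrable _ _ _); apply/funext => x /=.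
Qed.

Lemma intD g h : INT g -> INT h -> INT (fun x => g x + h x).
Proof.
move=> ig ih; have := integrableD mD ig ih.
by congr (integrable _ _ _); apply/funext => x /=.
Qed.

Lemma intMh (h : R -> R) : measurable_fun `[m, M] h ->
  (exists B, forall x, x \in `[m, M] -> `|h x| <= B) ->
  INT (fun x => h x * f x).
Proof.
move=> mh [B hB].
have := @integrableMr _ _ _ (@lebesgue_measure R) _ mD h (EFin \o f) mh _ intf.
move=> H; have {}H := H _.
suff: [bounded h x | x in `[m, M]].
  move=> /H; by congr (integrable _ _ _); apply/funext => x /=.
exists B; split; first exact: num_real.
move=> y By x Ax; apply: le_trans (hB x _) _; first by [].
exact: ltW.
Qed.


Lemma intY k c : INT (fun x => (x - c) ^+ k * f x).
Proof.
apply: intMh.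
  apply: measurable_realfun.measurable_funX; apply: measurable_realfun.measurable_funB => //; exact: measurable_cst.
exists ((`|m| + `|M| + `|c|) ^+ k) => x.
rewrite in_itv /= => /andP[hm hM].
rewrite normrX; apply: lerXn2r; rewrite ?nnegrE ?normr_ge0 //.
have h1 := ler_norm M; have h2 : - `|m| <= m by rewrite lerNl -normrN ler_norm.
have h4 := normr_ge0 m; have h5 := normr_ge0 M.
have h3 : `|x| <= `|m| + `|M| by rewrite ler_norml; apply/andP; split; lra.
apply: le_trans (ler_normB x c) _; lra.
Qed.

Lemma intX : INT (fun x => x * f x).
Proof.
have := intY 1 0; congr (INT _); apply/funext => x; by rewrite subr0 expr1.
Qed.

Definition Ik mu k := Rintegral lebesgue_measure `[m, M] (fun x => (x - mu) ^+ k * f x).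

Lemma Rlin a g h : INT g -> INT h ->
  Rintegral lebesgue_measure `[m, M] (fun x => a * g x + h x) =
  a * Rintegral lebesgue_measure `[m, M] g + Rintegral lebesgue_measure `[m, M] h.
Proof.
move=> ig ih; rewrite (RintegralD mD (intZ a _ ig) ih).
by rewrite (RintegralZl a mD ig).
Qed.

Lemma Rcomb mu (a0 a1 a2 a3 a4 : R) :
  Rintegral lebesgue_measure `[m, M] (fun x =>
    a4 * ((x - mu) ^+ 4 * f x) + (a3 * ((x - mu) ^+ 3 * f x) +
    (a2 * ((x - mu) ^+ 2 * f x) + (a1 * ((x - mu) ^+ 1 * f x) +
    a0 * ((x - mu) ^+ 0 * f x))))) =
  a4 * Ik mu 4 + (a3 * Ik mu 3 + (a2 * Ik mu 2 + (a1 * Ik mu 1 + a0 * Ik mu 0))).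
Proof.
rewrite /Ik.
rewrite Rlin; last 2 first.
- exact: intY.
- repeat apply: intD; apply: intZ; exact: intY.
rewrite Rlin; last 2 first.
- exact: intY.
- repeat apply: intD; apply: intZ; exact: intY.
rewrite Rlin; last 2 first.
- exact: intY.
- repeat apply: intD; apply: intZ; exact: intY.
rewrite (RintegralD mD (intZ _ _ (intY _ _)) (intZ _ _ (intY _ _))).
by rewrite !(RintegralZl _ mD (intY _ _)).
Qed.

End Cont.

Lemma comb_bound (R : realType) (m M mu I0 I1 I2 I3 I4 : R) :
  I0 = 1 -> I1 = 0 -> I2 != (mu - m) * (M - mu) ->
  (forall c, 0 <= (-1) * I4 + ((2 * c + (m + M - 2 * mu)) * I3 +
     (((mu - m) * (M - mu) - c ^+ 2 - 2 * c * (m + M - 2 * mu)) * I2 +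
     (((m + M - 2 * mu) * c ^+ 2 - 2 * c * ((mu - m) * (M - mu))) * I1 +
      ((mu - m) * (M - mu) * c ^+ 2) * I0)))) ->
  I4 <= mu4_bound m M mu I2 I3.
Proof.
move=> h0 h1 hE hc; rewrite /mu4_bound.
set s := m + M - 2 * mu; set A := (mu - m) * (M - mu).
have hE' : A - I2 != 0 by rewrite subr_eq0 eq_sym.
refine (@key_alg _ _ _ _ _ _ hE' _).
have := hc (- (I3 - s * I2) / (A - I2)); rewrite h0 h1 -/s -/A.
set c := - (I3 - s * I2) / (A - I2).
have -> : -1 * I4 + ((2 * c + s) * I3 + ((A - c ^+ 2 - 2 * c * s) * I2 +
     ((s * c ^+ 2 - 2 * c * A) * 0 + A * c ^+ 2 * 1))) =
   - I4 + s * I3 + A * I2 + 2 * c * (I3 - s * I2) + c ^+ 2 * (A - I2) by ring.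
done.
Qed.

Lemma Scomb (R : realType) n (p x : 'I_n -> R) (a0 a1 a2 a3 a4 : R) :
  \sum_(i < n) (a4 * (p i * (x i - dmean p x) ^+ 4) + (a3 * (p i * (x i - dmean p x) ^+ 3) +
    (a2 * (p i * (x i - dmean p x) ^+ 2) + (a1 * (p i * (x i - dmean p x) ^+ 1) +
    a0 * (p i * (x i - dmean p x) ^+ 0))))) =
  a4 * dcmoment p x 4 + (a3 * dcmoment p x 3 + (a2 * dcmoment p x 2 +
    (a1 * dcmoment p x 1 + a0 * dcmoment p x 0))).
Proof. by rewrite /dcmoment !big_split /= -!mulr_sumr. Qed.

Theorem theorem2p2 (R : realType) (m M : R) (hmM : m < M) :
  (* discrete case *)
  (forall (n : nat) (x p : 'I_n -> R),
     (forall i, m <= x i <= M) ->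
     (forall i, 0 <= p i) ->
     \sum_(i < n) p i = 1 ->
     let mu := dmean p x in
     dcmoment p x 2 != (mu - m) * (M - mu) ->
     dcmoment p x 4 <= mu4_bound m M mu (dcmoment p x 2) (dcmoment p x 3))
  /\
  (* continuous case *)
  (forall f : R -> R,
     measurable_fun `[m, M] f ->
     (forall y, y \in `[m, M] -> 0 <= f y) ->
     lebesgue_measure.-integrable `[m, M] (EFin \o f) ->
     Rintegral lebesgue_measure `[m, M] f = 1 ->
     let mu := cmean m M f in
     ccmoment m M f 2 != (mu - m) * (M - mu) ->
     ccmoment m M f 4 <= mu4_bound m M mu (ccmoment m M f 2) (ccmoment m M f 3)).
Proof.
split.
  move=> n x p hx hp hp1 mu hE.
  apply: (@comb_bound _ m M mu (dcmoment p x 0) (dcmoment p x 1)) => //.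
  - rewrite /dcmoment; under eq_bigr do rewrite expr0 mulr1; exact: hp1.
  - rewrite /dcmoment.
    under eq_bigr do rewrite expr1 mulrBr.
    by rewrite sumrB -mulr_suml hp1 mul1r /dmean subrr.
  - move=> c.
    set s := m + M - 2 * mu; set A := (mu - m) * (M - mu).
    have H := @Scomb _ _ p x (A * c ^+ 2) (s * c ^+ 2 - 2 * c * A) (A - c ^+ 2 - 2 * c * s) (2 * c + s) (-1).
    rewrite -H.
    apply: sumr_ge0 => i _.
    have -> : -1 * (p i * (x i - dmean p x) ^+ 4) + ((2 * c + s) * (p i * (x i - dmean p x) ^+ 3) +
      ((A - c ^+ 2 - 2 * c * s) * (p i * (x i - dmean p x) ^+ 2) +
      ((s * c ^+ 2 - 2 * c * A) * (p i * (x i - dmean p x) ^+ 1) +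
      A * c ^+ 2 * (p i * (x i - dmean p x) ^+ 0)))) =
      p i * (((x i - m) * (M - x i)) * (x i - mu - c) ^+ 2).
      by rewrite /s /A /mu; ring.
    have /andP[h1 h2] := hx i.
    apply: mulr_ge0 => //; apply: mulr_ge0; last exact: sqr_ge0.
    apply: mulr_ge0; lra.
move=> f mf f0 intf f1 mu hE.
apply: (@comb_bound _ m M mu (Ik _ m M f mu 0) (Ik _ m M f mu 1)) => //.
- rewrite /Ik; under eq_Rintegral do rewrite expr0 mul1r; exact: f1.
- rewrite /Ik; under eq_Rintegral do rewrite expr1 mulrBl.
  rewrite (RintegralB (@mD _ m M) (@intX _ m M f intf) (@intZ _ m M mu f intf)).
  rewrite (RintegralZl mu (@mD _ m M) intf) f1 mulr1.
  exact: subrr.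
- move=> c.
  set s := m + M - 2 * mu; set A := (mu - m) * (M - mu).
  have H := @Rcomb _ m M f intf mu (A * c ^+ 2) (s * c ^+ 2 - 2 * c * A) (A - c ^+ 2 - 2 * c * s) (2 * c + s) (-1).
  rewrite -H.
  apply: Rintegral_ge0 => y Dy.
  have -> : -1 * ((y - mu) ^+ 4 * f y) +
    ((2 * c + s) * ((y - mu) ^+ 3 * f y) +
    ((A - c ^+ 2 - 2 * c * s) * ((y - mu) ^+ 2 * f y) +
    ((s * c ^+ 2 - 2 * c * A) * ((y - mu) ^+ 1 * f y) +
     A * c ^+ 2 * ((y - mu) ^+ 0 * f y)))) =
    ((y - m) * (M - y)) * (y - mu - c) ^+ 2 * f y.
    by rewrite /s /A; ring.
  have Dy' : y \in `[m, M] by [].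

  have := Dy'; rewrite in_itv /= => /andP[h1 h2].
  apply: mulr_ge0; last exact: f0.
  apply: mulr_ge0; last exact: sqr_ge0.
  apply: mulr_ge0; lra.
Qed.
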